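(* Let $R$ be a finite group of squarefree order with trivial centre, of the form $R=N\rtimes M$ with $N$ cyclic of order $n$ and $M$ cyclic of order $m$. Suppose that for every pair of primes $p,q$ with $p\mid m$ and $q\mid n$, every subgroup of $R$ of order $pq$ is nonabelian. Let $H$ be a characteristic subgroup of prime index in $R$. If $m$ is not prime, then $\mathbf{C}_{\mathrm{Aut}(R)}(H)=1$, i.e. the only automorphism of $R$ fixing every element of $H$ is the identity.
   Context: $\mathbf{C}_{\mathrm{Aut}(R)}(H)$ denotes the set of automorphisms of $R$ that fix $H$ pointwise. *)

(* Defs.v *)
From mathcomp Require Import all_boot all_fingroup all_solvable.
Set Implicit Arguments. Unset Strict Implicit. Unset Printing Implicit Defensive.

Definition squarefree_nat (k : nat) : Prop :=
  forall p : nat, prime p -> ~~ (p * p %| k).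

(* Main.v *)
Require Import Defs.
From mathcomp Require Import all_boot all_fingroup all_solvable.
Local Open Scope group_scope.

Lemma fpf (gT : finGroupType) (R N M : {group gT}) :
  N ><| M = R ->
  (forall (p q : nat) (K : {group gT}),
      prime p -> prime q -> (p %| #|M|)%N -> (q %| #|N|)%N ->
      K \subset R -> #|K| = (p * q)%N -> ~~ abelian K) ->
  forall y v, y \in M -> v \in N -> commute v y -> v != 1 -> y = 1.
Proof.
move=> defR hK y v yM vN cvy nv1.
have [nNR sMR _ _ tiNM] := sdprod_context defR.
have sNR := normal_sub nNR.
apply/eqP; apply: contraT => ny1.
have y1 : 1 < #[y] by rewrite order_gt1.
have v1 : 1 < #[v] by rewrite order_gt1.
have [z zy oz] := Cauchy (pdiv_prime y1) (pdiv_dvd #[y]).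
have [w wv ow] := Cauchy (pdiv_prime v1) (pdiv_dvd #[v]).
have zM : z \in M by apply: (subsetP _ _ zy); rewrite cycle_subG.
have wN : w \in N by apply: (subsetP _ _ wv); rewrite cycle_subG.
have cwz : commute w z.
  case/cycleP: zy => i ->; case/cycleP: wv => j ->; exact: commuteX2.
have sC : <[z]> \subset 'C(<[w]>).
  by rewrite cycle_subG /= cent_cycle; apply/cent1P.
have := hK _ _ (<[w]> <*> <[z]>)%G (pdiv_prime y1) (pdiv_prime v1).
rewrite abelianY !cycle_abelian sC /=; apply.
- by apply: (dvdn_trans (pdiv_dvd _)); rewrite order_dvdG.
- by apply: (dvdn_trans (pdiv_dvd _)); rewrite order_dvdG.
- by rewrite join_subG !cycle_subG (subsetP sNR) ?(subsetP sMR).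
rewrite /= cent_joinEr // TI_cardMg; last first.
  by apply/trivgP; rewrite -tiNM setISS // cycle_subG.
by rewrite -!orderE oz ow mulnC.
Qed.
Arguments fpf {gT R N M}.


Theorem lemma3p1 (gT : finGroupType) (R N M H : {group gT}) :
  squarefree_nat #|R| ->
  'Z(R) = 1 ->
  N ><| M = R ->
  cyclic N -> cyclic M ->
  (forall (p q : nat) (K : {group gT}),
      prime p -> prime q -> (p %| #|M|)%N -> (q %| #|N|)%N ->
      K \subset R -> #|K| = (p * q)%N -> ~~ abelian K) ->
  H \char R ->
  prime #|R : H| ->
  ~~ prime #|M| ->
  forall a : {perm gT}, a \in Aut R ->
    (forall x, x \in H -> a x = x) -> a = 1.
Proof.
move=> _ Z1 defR cycN cycM hK chH prH nprM a aA fixH.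
have [nNR sMR mulNM nNM tiNM] := sdprod_context defR.
have sNR := normal_sub nNR.
have abN := cyclic_abelian cycN.
have nHR := char_normal chH.
have /andP [sHR nHR'] := nHR.
have nabR : ~~ abelian R.
  apply/negP => abR; move: prH.
  have := dvdn_indexg R H.
  by rewrite -{2}(center_idP abR) Z1 cards1 dvdn1 => /eqP ->.
have ntN : N :!=: 1.
  apply: contra nabR => /eqP N1; rewrite -mulNM N1 mul1g; exact: cyclic_abelian.
have ntM : M :!=: 1.
  by apply: contra nabR => /eqP M1; rewrite -mulNM M1 mulg1.
have sNH : N \subset H.
  have [y yM ny1] := trivgPn _ ntM.
  have sR'H : R^`(1) \subset H.
    apply: (der1_min nHR'); apply: cyclic_abelian; apply: prime_cyclic.
    by rewrite card_quotient.
  pose f u := [~ u, y].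
  have yNN : y \in 'N(N) by apply: (subsetP nNM).
  have fN : forall u, u \in N -> f u \in N.
    by move=> u uN; rewrite /f commgEl groupM ?groupV ?memJ_norm.
  have fM : {in N &, forall u u', f (u * u') = f u * f u'}.
    move=> u u' uN u'N; rewrite /f commMgJ; congr (_ * _).
    by apply/conjg_fixP; apply/commgP; apply: (centsP abN); rewrite ?fN.
  have finj : {in N &, injective f}.
    move=> u u' uN u'N fuu.
    have e1 : f (u * u'^-1) = 1.
      rewrite fM ?groupV // fuu -fM ?groupV // mulgV /f comm1g //.
    apply/eqP; rewrite eq_mulgV1; apply: contraT => nu.
    case/negP: ny1; apply/eqP.
    apply: (fpf defR hK _ _ yM _ _ nu); [by rewrite groupM ?groupV|].
    by apply/commgP; apply/eqP.
  have sS : [set f u | u in N] \subset N :&: H.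
    apply/subsetP => _ /imsetP [u uN ->]; rewrite inE fN //=.
    apply: (subsetP sR'H); apply: mem_commg; first exact: (subsetP sNR).
    exact: (subsetP sMR).
  have := subset_leq_card sS; rewrite card_in_imset // => le.
  have : N :&: H = N by apply/eqP; rewrite eqEcard subsetIl le.
  by move/setIidPl.
have ntMH : M :&: H != 1.
  apply: contra nprM => /eqP MH1.
  have := group_modl M sNH; rewrite mulNM MH1 mulg1 (setIidPr sHR) => NH.
  by rewrite (index_sdprod defR) NH.
apply/permP => x; rewrite perm1.
case xR: (x \in R); last by rewrite (out_Aut aA) ?xR.
have axR := Aut_closed aA xR.
have cR : x^-1 * a x \in R by rewrite groupM ?groupV.
have cH : forall h, h \in H -> commute h (x^-1 * a x).
  move=> h hH.
  have kH : h ^ x^-1 \in H by rewrite memJ_norm // groupV (subsetP nHR').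
  have kR : h ^ x^-1 \in R by apply: (subsetP sHR).
  have e : a ((h ^ x^-1) ^ x) = a (h ^ x^-1) ^ a x.
    by rewrite -(autmE aA) (morphJ (autm aA) kR xR).
  rewrite conjgKV (fixH _ hH) (fixH _ kH) -conjgM in e.
  by apply/commgP; apply/conjg_fixP; rewrite -e.
move: cR; rewrite -mulNM => /mulsgP [u y uN yM cuy].
have y1 : y = 1.
  have [v vN nv1] := trivgPn _ ntN.
  apply: (fpf defR hK _ _ yM vN _ nv1).
  have hvc : v * (u * y) = u * y * v by have := cH v (subsetP sNH v vN); rewrite cuy.
  have huv : v * u = u * v by apply: (centsP abN).
  apply: (mulgI u); rewrite mulgA -huv -mulgA hvc -mulgA //.
move: cuy; rewrite y1 mulg1 => cu.
have u1 : u = 1.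
  have [z zMH nz1] := trivgPn _ ntMH.
  move: zMH; rewrite inE => /andP [zM zH].
  apply/eqP; apply: contraT => nu; case/negP: nz1; apply/eqP.
  apply: (fpf defR hK _ _ zM uN _ nu).
  by rewrite /commute; rewrite -cu; symmetry; apply: cH.
apply: (mulgI x^-1); rewrite cu u1 mulVg //.
Qed.
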